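(* Let $r_1,r_2,r_3,L,M>0$ with $r_2>\max(r_1,r_3)$, and let $\lambda_1,F,\varphi_1$ be as in the context. Let $c_A>2\sqrt{-\lambda_1}$, let $B,\tau\ge0$ and $T>0$, and let $A\in\mathcal C(\mathbb{R},[0,+\infty))$ with $A(t)=c_A(t-\tau)+B$ for $t\in[\tau,\tau+T)$. Let $r(t,x)=r_1$ if $x<A(t)$, $r_2$ if $A(t)\le x<A(t)+L$, $r_3$ if $x\ge A(t)+L$, and let $f$ be globally bounded in $(t,x)$, $\mathcal C^2$ in $u$, with $f(t,x,0)=0$, $\partial_uf(t,x,0)=r(t,x)$, $r(t,x)u\ge f(t,x,u)\ge r(t,x)u-Mu^2$ for $u\ge0$, $f(t,x,u)<0$ for $u>1$. Let $c=F(c_A)$ if $c_A<2\sqrt{r_1}+2\sqrt{-\lambda_1-r_1}$ and $c=2\sqrt{r_1}$ otherwise, $\lambda(c)=\frac12(c-\sqrt{c^2-4r_1})$, and $$\overline{u}(t,x)=\begin{cases}2 & x\le ct-\frac{\ln2}{\lambda(c)},\\ e^{-\lambda(c)(x-ct)} & ct-\frac{\ln2}{\lambda(c)}<x<c_At,\\ e^{-\lambda(c)(c_A-c)t}e^{-\frac{c_A(x-c_At)}{2}}\varphi_1\big(\frac{x-c_At}{L}\big) & x\ge c_At.\end{cases}$$ Then for every constant $C\ge1$, $(t,x)\mapsto C\overline{u}(t-\tau,x-B)$ is a (generalized) super-solution of $\partial_tu=\partial_{xx}u+f(t,x,u)$ for $t\in[\tau,\tau+T)$, $x\in\mathbb{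R}$.
   Context: $\underline{L}=0$ if $r_1=r_3$, otherwise $\underline{L}=\frac{1}{\sqrt{r_2-\max(r_1,r_3)}}\operatorname{arccot}\big(\sqrt{\frac{r_2-\max(r_1,r_3)}{|r_1-r_3|}}\big)$. $\lambda_1=-\max(r_1,r_3)$ if $L\le\underline{L}$; if $L>\underline{L}$, $\lambda_1$ is the unique solution in $(-r_2,\min(-\max(r_1,r_3),\pi^2/L^2-r_2))$ of $\cot(L\sqrt{r_2+\lambda_1})=\frac{r_2+\lambda_1-\sqrt{(r_1+\lambda_1)(r_3+\lambda_1)}}{\sqrt{r_2+\lambda_1}(\sqrt{-r_1-\lambda_1}+\sqrt{-r_3-\lambda_1})}$. $F(c)=\frac{c-2\sqrt{-\lambda_1-r_1}}{2}+\frac{2r_1}{c-2\sqrt{-\lambda_1-r_1}}$. $\varphi_1$ (normalized by $\varphi_1(0)=1$): (1) if $L>\underline{L}$, with $C_3\in(0,\pi/2)$, $\cot C_3=\sqrt{(-r_1-\lambda_1)/(r_2+\lambda_1)}$: $\varphi_1(y)=e^{L\sqrt{-r_1-\lambda_1}y}$ ($y\le0$), $\sin(L\sqrt{r_2+\lambda_1}y+C_3)/\sin C_3$ ($0<y<1$), $\frac{\sin(L\sqrt{r_2+\lambda_1}+C_3)}{\sin C_3}e^{-L\sqrt{-r_3-\lambda_1}(y-1)}$ ($y\ge1$); (2) if $r_1<r_3$, $L\le\underline{L}$, with $C_3\in(0,\pi/2)$, $\cot C_3=\sqrt{(r_3-r_1)/(r_2-r_3)}$: $\varphi_1(y)=e^{L\sqrt{r_3-r_1}y}$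 ($y\le0$), $\sin(L\sqrt{r_2-r_3}y+C_3)/\sin C_3$ ($0<y<1$), $\frac{\sin(L\sqrt{r_2-r_3}+C_3)+\sqrt{r_2-r_3}\cos(L\sqrt{r_2-r_3}+C_3)L(y-1)}{\sin C_3}$ ($y\ge1$); (3) if $r_1>r_3$, $L\le\underline{L}$: $\varphi_1(y)=\psi(1-y)/\psi(1)$ with $\psi$ the function of case (2) with $r_1,r_3$ interchanged. A (generalized) super-solution is a continuous, piecewise smooth function satisfying $\partial_t\overline u\ge\partial_{xx}\overline u+f(t,x,\overline u)$ in each smoothness region and $\partial_x\overline u(t,x^-)\ge\partial_x\overline u(t,x^+)$ across interfaces. *)

(* Defs.v *)
From Stdlib Require Import Reals Lra List.
From Coquelicot Require Import Coquelicot.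
Open Scope R_scope.

Definition arccot (x : R) : R := PI / 2 - atan x.

Definition cot (x : R) : R := cos x / sin x.

Definition Lbar (r1 r2 r3 : R) : R :=
  if Req_EM_T r1 r3 then 0
  else / sqrt (r2 - Rmax r1 r3)
       * arccot (sqrt ((r2 - Rmax r1 r3) / Rabs (r1 - r3))).

Definition is_lambda1 (r1 r2 r3 L l : R) : Prop :=
  (L <= Lbar r1 r2 r3 -> l = - Rmax r1 r3) /\
  (Lbar r1 r2 r3 < L ->
     - r2 < l /\ l < Rmin (- Rmax r1 r3) (PI ^ 2 / L ^ 2 - r2) /\
     cot (L * sqrt (r2 + l)) =
       (r2 + l - sqrt ((r1 + l) * (r3 + l)))
       / (sqrt (r2 + l) * (sqrt (- r1 - l) + sqrt (- r3 - l)))).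

Definition Ffun (r1 lam1 c : R) : R :=
  (c - 2 * sqrt (- lam1 - r1)) / 2 + 2 * r1 / (c - 2 * sqrt (- lam1 - r1)).

(** The function psi of case (2) (requires r1 < r3, L <= Lbar). *)
Definition psi2 (r1 r2 r3 L y : R) : R :=
  let C3 := arccot (sqrt ((r3 - r1) / (r2 - r3))) in
  if Rle_dec y 0 then exp (L * sqrt (r3 - r1) * y)
  else if Rlt_dec y 1 then sin (L * sqrt (r2 - r3) * y + C3) / sin C3
  else (sin (L * sqrt (r2 - r3) + C3)
        + sqrt (r2 - r3) * cos (L * sqrt (r2 - r3) + C3) * L * (y - 1))
       / sin C3.

(** The principal eigenfunction varphi_1, normalised by varphi_1(0) = 1. *)
Definition phi1 (r1 r2 r3 L lam1 y : R) : R :=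
  if Rlt_dec (Lbar r1 r2 r3) L then
    let C3 := arccot (sqrt ((- r1 - lam1) / (r2 + lam1))) in
    if Rle_dec y 0 then exp (L * sqrt (- r1 - lam1) * y)
    else if Rlt_dec y 1 then sin (L * sqrt (r2 + lam1) * y + C3) / sin C3
    else sin (L * sqrt (r2 + lam1) + C3) / sin C3
         * exp (- L * sqrt (- r3 - lam1) * (y - 1))
  else if Rlt_dec r1 r3 then psi2 r1 r2 r3 L y
  else psi2 r3 r2 r1 L (1 - y) / psi2 r3 r2 r1 L 1.

Definition rfun (r1 r2 r3 L : R) (A : R -> R) (t x : R) : R :=
  if Rlt_dec x (A t) then r1
  else if Rlt_dec x (A t + L) then r2
  else r3.

Definition cspeed (r1 lam1 cA : R) : R :=
  if Rlt_dec cA (2 * sqrt r1 + 2 * sqrt (- lam1 - r1)) then Ffun r1 lam1 cA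
  else 2 * sqrt r1.

Definition lam_of (r1 c : R) : R := (c - sqrt (c ^ 2 - 4 * r1)) / 2.

Definition ubar (r1 r2 r3 L lam1 cA t x : R) : R :=
  let c := cspeed r1 lam1 cA in
  let lc := lam_of r1 c in
  if Rle_dec x (c * t - ln 2 / lc) then 2
  else if Rlt_dec x (cA * t) then exp (- lc * (x - c * t))
  else exp (- lc * (cA - c) * t) * exp (- cA * (x - cA * t) / 2)
       * phi1 r1 r2 r3 L lam1 ((x - cA * t) / L).

Definition cont_in_strip (t0 t1 : R) (h : R -> R -> R) (t x : R) : Prop :=
  forall eps, 0 < eps -> exists delta, 0 < delta /\
    forall s y, t0 <= s < t1 -> Rabs (s - t) < delta -> Rabs (y - x) < delta ->
      Rabs (h s y - h t x) < eps.

Definition cont2 (h : R -> R -> R) (t x : R) : Prop :=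
  forall eps, 0 < eps -> exists delta, 0 < delta /\
    forall s y, Rabs (s - t) < delta -> Rabs (y - x) < delta ->
      Rabs (h s y - h t x) < eps.

Definition left_dx (u : R -> R -> R) (t x l : R) : Prop :=
  forall eps, 0 < eps -> exists delta, 0 < delta /\
    forall h, - delta < h < 0 -> Rabs ((u t (x + h) - u t x) / h - l) < eps.
Definition right_dx (u : R -> R -> R) (t x l : R) : Prop :=
  forall eps, 0 < eps -> exists delta, 0 < delta /\
    forall h, 0 < h < delta -> Rabs ((u t (x + h) - u t x) / h - l) < eps.

(** Partial derivatives (Coquelicot's total [Derive]). *)
Definition dt (u : R -> R -> R) (t x : R) : R := Derive (fun s => u s x) t.
Definition dx (u : R -> R -> R) (t x : R) : R := Derive (fun y => u t y) x.
Definition dxx (u : R -> R -> R) (t x : R) : R := Derive (fun y => dx u t y) x.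

(** Generalized super-solution of  u_t = u_xx + f(t,x,u)  on t in [t0,t1),
    x in R: u is continuous on the strip, and there are finitely many
    continuous interface curves x = g(t) such that
    - off the interfaces (for t0 < t < t1) u is C^{1,2} (partial derivatives
      u_t, u_x, u_xx exist and are jointly continuous) and
      u_t >= u_xx + f(t,x,u);
    - on an interface, the one-sided x-derivatives exist and
      u_x(t,x^-) >= u_x(t,x^+). *)
Definition gen_supersolution (f : R -> R -> R -> R) (t0 t1 : R)
    (u : R -> R -> R) : Prop :=
  (forall t x, t0 <= t < t1 -> cont_in_strip t0 t1 u t x) /\
  exists gs : list (R -> R),
    (forall g, In g gs -> forall t, t0 <= t < t1 -> continuity_pt g t) /\
    (forall t x, t0 < t < t1 -> (forall g, In g gs -> x <> g t) ->
       ex_derive (fun s => u s x) t /\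
       ex_derive (fun y => u t y) x /\
       ex_derive (fun y => dx u t y) x /\
       cont2 (dt u) t x /\ cont2 (dx u) t x /\ cont2 (dxx u) t x /\
       dt u t x >= dxx u t x + f t x (u t x)) /\
    (forall t x, t0 < t < t1 -> (exists g, In g gs /\ x = g t) ->
       exists dl dr, left_dx u t x dl /\ right_dx u t x dr /\ dl >= dr).

(* Main.v *)
Require Import Defs.
From Stdlib Require Import Reals Lra List.
From Coquelicot Require Import Coquelicot.
Open Scope R_scope.

Lemma loc_of (P : R -> Prop) s e : 0 < e -> (forall z, Rabs (z - s) < e -> P z) -> locally s P.
Proof. intros He H. exists (mkposreal e He). intros z Hz. apply H. exact Hz. Qed.

Lemma transfer (u v : R -> R -> R) t x d : 0 < d ->
  (forall s y, Rabs (s - t) < d -> Rabs (y - x) < d -> u s y = v s y) ->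
  forall s y, Rabs (s - t) < d -> Rabs (y - x) < d ->
   dt u s y = dt v s y /\ dx u s y = dx v s y /\ dxx u s y = dxx v s y /\
   (ex_derive (fun s => v s y) s -> ex_derive (fun s => u s y) s) /\
   (ex_derive (fun y => v s y) y -> ex_derive (fun y => u s y) y) /\
   (ex_derive (fun y => dx v s y) y -> ex_derive (fun y => dx u s y) y).
Proof.
intros Hd Heq.
assert (Lt : forall s y, Rabs (s - t) < d -> Rabs (y - x) < d ->
   locally s (fun s' => v s' y = u s' y)).
{ intros s y Hs Hy. apply (loc_of _ _ (d - Rabs (s - t))). lra.
  intros z Hz. symmetry; apply Heq; auto. revert Hz Hs; split_Rabs; lra. }
assert (Lx : forall s y, Rabs (s - t) < d -> Rabs (y - x) < d ->
   locally y (fun y' => v s y' = u s y')).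
{ intros s y Hs Hy. apply (loc_of _ _ (d - Rabs (y - x))). lra.
  intros z Hz. symmetry; apply Heq; auto. revert Hz Hy; split_Rabs; lra. }
assert (Ex : forall s y, Rabs (s - t) < d -> Rabs (y - x) < d -> dx u s y = dx v s y).
{ intros s y Hs Hy. unfold dx. symmetry. apply Derive_ext_loc. apply Lx; auto. }
assert (Lxx : forall s y, Rabs (s - t) < d -> Rabs (y - x) < d ->
   locally y (fun y' => dx v s y' = dx u s y')).
{ intros s y Hs Hy. apply (loc_of _ _ (d - Rabs (y - x))). lra.
  intros z Hz. symmetry; apply Ex; auto. revert Hz Hy; split_Rabs; lra. }
intros s y Hs Hy.
split; [|split; [|split; [|split; [|split]]]].
- unfold dt. symmetry. apply Derive_ext_loc. apply Lt; auto.
- apply Ex; auto.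
- unfold dxx. symmetry. apply Derive_ext_loc. apply Lxx; auto.
- apply ex_derive_ext_loc. apply Lt; auto.
- apply ex_derive_ext_loc. apply Lx; auto.
- apply ex_derive_ext_loc. apply Lxx; auto.
Qed.

Lemma cont2_loc (h h' : R -> R -> R) t x d : 0 < d ->
  (forall s y, Rabs (s - t) < d -> Rabs (y - x) < d -> h s y = h' s y) ->
  cont2 h t x -> cont2 h' t x.
Proof.
intros Hd Heq Hc eps Heps. destruct (Hc eps Heps) as [d' [Hd' H']].
exists (Rmin d d'). split. apply Rmin_pos; auto.
intros s y Hs Hy.
assert (Rmin d d' <= d) by apply Rmin_l. assert (Rmin d d' <= d') by apply Rmin_r.
rewrite <- !Heq; try lra. apply H'; lra. rewrite Rminus_diag, Rabs_R0; lra.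
rewrite Rminus_diag, Rabs_R0; lra.
Qed.

Lemma box_lt a b t x : x < a + b * t -> exists d, 0 < d /\
  forall s y, Rabs (s - t) < d -> Rabs (y - x) < d -> y < a + b * s.
Proof.
intros H. set (gap := a + b * t - x).
assert (Hb : 0 <= Rabs b) by apply Rabs_pos.
exists (gap / (2 * (1 + Rabs b))). split.
{ unfold gap. apply Rdiv_lt_0_compat; lra. }
set (d := gap / (2 * (1 + Rabs b))).
assert (Hdd : d * (1 + Rabs b) = gap / 2) by (unfold d; field; lra).
intros s y Hs Hy.
assert (Hm : Rabs (b * (s - t)) <= Rabs b * d).
{ rewrite Rabs_mult. apply Rmult_le_compat_l; lra. }
assert (- (Rabs b * d) <= b * (s - t)) by (revert Hm; split_Rabs; lra).
revert Hy; split_Rabs; unfold gap in *; lra.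
Qed.

Lemma box_gt a b t x : a + b * t < x -> exists d, 0 < d /\
  forall s y, Rabs (s - t) < d -> Rabs (y - x) < d -> a + b * s < y.
Proof.
intros H. destruct (box_lt (-a) (-b) t (-x)) as [d [Hd Hd']]. lra.
exists d. split; auto. intros s y Hs Hy.
assert (- y < - a + - b * s). apply Hd'; auto.
replace (- y - - x) with (- (y - x)) by ring. rewrite Rabs_Ropp; auto.
lra.
Qed.

Lemma onesided_left (u : R -> R -> R) t x (p : R -> R) l e : 0 < e ->
  (forall h, - e < h < 0 -> u t (x + h) = p (x + h)) -> u t x = p x ->
  is_derive p x l -> left_dx u t x l.
Proof.
intros He Hp Hx Hd. apply is_derive_Reals in Hd.
intros eps Heps. destruct (Hd eps Heps) as [d' Hd'].
exists (Rmin e d'). split. apply Rmin_pos; auto. apply cond_pos.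
intros h Hh.
assert (Rmin e d' <= e) by apply Rmin_l. assert (Rmin e d' <= d') by apply Rmin_r.
rewrite Hp, Hx by lra. apply Hd'. lra. rewrite Rabs_left; lra.
Qed.

Lemma onesided_right (u : R -> R -> R) t x (p : R -> R) l e : 0 < e ->
  (forall h, 0 < h < e -> u t (x + h) = p (x + h)) -> u t x = p x ->
  is_derive p x l -> right_dx u t x l.
Proof.
intros He Hp Hx Hd. apply is_derive_Reals in Hd.
intros eps Heps. destruct (Hd eps Heps) as [d' Hd'].
exists (Rmin e d'). split. apply Rmin_pos; auto. apply cond_pos.
intros h Hh.
assert (Rmin e d' <= e) by apply Rmin_l. assert (Rmin e d' <= d') by apply Rmin_r.
rewrite Hp, Hx by lra. apply Hd'. lra. rewrite Rabs_right; lra.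
Qed.

Lemma pw2 (h p q : R -> R -> R) a b t x :
  cont2 p t x -> cont2 q t x ->
  (forall s y, y < a + b * s -> h s y = p s y) ->
  (forall s y, a + b * s < y -> h s y = q s y) ->
  (forall s y, h s y = p s y \/ h s y = q s y) ->
  (x = a + b * t -> p t x = q t x) -> cont2 h t x.
Proof.
intros Hp Hq H1 H2 H3 H4.
destruct (Rtotal_order x (a + b * t)) as [Hlt | [Heq | Hgt]].
- destruct (box_lt a b t x Hlt) as [d [Hd Hd']].
  apply (cont2_loc p h t x d Hd); auto.
  intros; symmetry; apply H1; apply Hd'; auto.
- intros eps Heps. destruct (Hp eps Heps) as [d1 [Hd1 Hd1']].
  destruct (Hq eps Heps) as [d2 [Hd2 Hd2']].
  exists (Rmin d1 d2). split. apply Rmin_pos; auto.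
  assert (Rmin d1 d2 <= d1) by apply Rmin_l. assert (Rmin d1 d2 <= d2) by apply Rmin_r.
  intros s y Hs Hy.
  assert (E : h t x = p t x) by (destruct (H3 t x) as [E|E]; rewrite E; auto; symmetry; auto).
  rewrite E. destruct (H3 s y) as [E'|E']; rewrite E'.
  + apply Hd1'; lra.
  + rewrite H4 by auto. apply Hd2'; lra.
- destruct (box_gt a b t x Hgt) as [d [Hd Hd']].
  apply (cont2_loc q h t x d Hd); auto.
  intros; symmetry; apply H2; apply Hd'; auto.
Qed.

Lemma cont1_iff (h : R -> R) y : continuous h y <->
  (forall eps, 0 < eps -> exists d, 0 < d /\ forall z, Rabs (z - y) < d -> Rabs (h z - h y) < eps).
Proof.
split.
- intros H eps Heps. apply filterlim_locally with (eps := mkposreal eps Heps) in H.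
  destruct H as [d Hd]. exists d. split. apply cond_pos.
  intros z Hz. apply (Hd z Hz).
- intros H. apply filterlim_locally. intros eps.
  destruct (H eps (cond_pos eps)) as [d [Hd Hd']].
  apply (loc_of _ _ d Hd). intros z Hz. apply (Hd' z Hz).
Qed.

Lemma pw1 (h p q : R -> R) a y :
  continuous p y -> continuous q y ->
  (forall z, z < a -> h z = p z) -> (forall z, a < z -> h z = q z) ->
  (forall z, h z = p z \/ h z = q z) -> (y = a -> p y = q y) -> continuous h y.
Proof.
intros Hp Hq H1 H2 H3 H4.
assert (C : cont2 (fun _ z => h z) 0 y).
{ apply (pw2 (fun _ z => h z) (fun _ z => p z) (fun _ z => q z) a 0).
  - intros eps Heps. apply cont1_iff with (eps := eps) in Hp; auto.
    destruct Hp as [d [Hd Hd']]. exists d; split; auto.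
  - intros eps Heps. apply cont1_iff with (eps := eps) in Hq; auto.
    destruct Hq as [d [Hd Hd']]. exists d; split; auto.
  - intros s z Hz; apply H1; lra.
  - intros s z Hz; apply H2; lra.
  - intros; apply H3.
  - intros; apply H4; lra. }
apply cont1_iff. intros eps Heps. destruct (C eps Heps) as [d [Hd Hd']].
exists d; split; auto. intros z Hz. apply (Hd' 0 z); auto. rewrite Rminus_0_r, Rabs_R0; auto.
Qed.
Lemma cder (g : R -> R) z : ex_derive g z -> continuous g z.
Proof. intros H. apply (@ex_derive_continuous R_AbsRing R_NormedModule). exact H. Qed.

Lemma cmul (f g : R -> R) x : continuous f x -> continuous g x -> continuous (fun y => f y * g y) x.
Proof. intros; apply (@continuous_mult R_UniformSpace R_AbsRing f g x); auto. Qed.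
Lemma cplus (f g : R -> R) x : continuous f x -> continuous g x -> continuous (fun y => f y + g y) x.
Proof. intros; apply (@continuous_plus R_UniformSpace R_AbsRing R_NormedModule f g x); auto. Qed.
Lemma ccomp (f g : R -> R) x : continuous f x -> continuous g (f x) -> continuous (fun y => g (f y)) x.
Proof. intros; apply (@continuous_comp R_UniformSpace R_UniformSpace R_UniformSpace f g x); auto. Qed.
Lemma cconst (k : R) x : continuous (fun _ : R => k) x.
Proof. apply (@continuous_const R_UniformSpace R_UniformSpace). Qed.
Lemma caff (a b : R) x : continuous (fun y => a * y + b) x.
Proof. apply cder. auto_derive. auto. Qed.
Lemma cexp z : continuous exp z.
Proof. apply cder. auto_derive. auto. Qed.


Lemma cont2_iff h t x : cont2 h t x <-> continuity_2d_pt h t x.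
Proof.
split.
- intros H eps. destruct (H eps (cond_pos eps)) as [d [Hd Hd']].
  exists (mkposreal d Hd). simpl. intros; apply Hd'; auto.
- intros H eps Heps. destruct (H (mkposreal eps Heps)) as [d Hd].
  exists d. split. apply cond_pos. intros; apply Hd; auto.
Qed.

Lemma cont_pt_of (g : R -> R) y : continuous g y -> continuity_pt g y.
Proof. intros H; apply continuity_pt_filterlim; exact H. Qed.

Lemma c2_comp (g : R -> R) h s y : continuous g (h s y) ->
  continuity_2d_pt h s y -> continuity_2d_pt (fun s y => g (h s y)) s y.
Proof. intros; apply continuity_1d_2d_pt_comp; auto. apply cont_pt_of; auto. Qed.

Lemma c2_affine (a b e : R) s y : continuity_2d_pt (fun s y => a * s + b * y + e) s y.
Proof.
apply continuity_2d_pt_plus; [|apply continuity_2d_pt_const].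
apply continuity_2d_pt_plus.
- apply continuity_2d_pt_mult. apply continuity_2d_pt_const. apply continuity_2d_pt_id1.
- apply continuity_2d_pt_mult. apply continuity_2d_pt_const. apply continuity_2d_pt_id2.
Qed.

Lemma c2_gaff (g : R -> R) a b e s y : (forall z, continuous g z) ->
  continuity_2d_pt (fun s y => g (a * s + b * y + e)) s y.
Proof. intros Hg. apply (c2_comp g (fun s y => a * s + b * y + e)). apply Hg. apply c2_affine. Qed.

Lemma ln2_pos : 0 < ln 2.
Proof. rewrite <- ln_1. apply ln_increasing; lra. Qed.

Lemma ubar_gen_cont (c lc cA L : R) (phi : R -> R) t x : 0 < lc -> c <= cA -> 0 <= t -> 0 < L ->
  (forall y, continuous phi y) -> phi 0 = 1 ->
  cont2 (fun t x => if Rle_dec x (c * t - ln 2 / lc) then 2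
     else if Rlt_dec x (cA * t) then exp (- lc * (x - c * t))
     else exp (- lc * (cA - c) * t) * exp (- cA * (x - cA * t) / 2) * phi ((x - cA * t) / L)) t x.
Proof.
intros Hlc Hc Ht HL Hphi Hphi0.
assert (Hl2 : 0 < ln 2 / lc) by (apply Rdiv_lt_0_compat; auto; apply ln2_pos).
set (h23 := fun t x => if Rlt_dec x (cA * t) then exp (- lc * (x - c * t))
     else exp (- lc * (cA - c) * t) * exp (- cA * (x - cA * t) / 2) * phi ((x - cA * t) / L)).
assert (C23 : cont2 h23 t x).
{ apply (pw2 h23 (fun t x => exp (- lc * (x - c * t)))
     (fun t x => exp (- lc * (cA - c) * t) * exp (- cA * (x - cA * t) / 2) * phi ((x - cA * t) / L)) 0 cA).
  - apply cont2_iff.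
    apply (continuity_2d_pt_ext (fun s y => exp ((lc * c) * s + (- lc) * y + 0))).
    { intros; f_equal; ring. }
    apply c2_gaff. apply cexp.
  - apply cont2_iff. apply continuity_2d_pt_mult; [apply continuity_2d_pt_mult|].
    + apply (continuity_2d_pt_ext (fun s y => exp ((- lc * (cA - c)) * s + 0 * y + 0))).
      { intros; f_equal; ring. }
      apply c2_gaff. apply cexp.
    + apply (continuity_2d_pt_ext (fun s y => exp ((cA * cA / 2) * s + (- cA / 2) * y + 0))).
      { intros; f_equal; field. }
      apply c2_gaff. apply cexp.
    + apply (continuity_2d_pt_ext (fun s y => phi ((- cA / L) * s + (/ L) * y + 0))).
      { intros; f_equal; field; lra. }
      apply c2_gaff. apply Hphi.
  - intros s y Hy. unfold h23. destruct (Rlt_dec y (cA * s)); auto; lra.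
  - intros s y Hy. unfold h23. destruct (Rlt_dec y (cA * s)); auto; lra.
  - intros s y. unfold h23. destruct (Rlt_dec y (cA * s)); auto.
  - intros Hx. rewrite Hx.
    replace ((0 + cA * t - cA * t) / L) with 0 by (field; lra). rewrite Hphi0.
    replace (- cA * (0 + cA * t - cA * t) / 2) with 0 by field. rewrite exp_0.
    rewrite Rmult_1_r, Rmult_1_r. f_equal. ring. }
apply (pw2 _ (fun _ _ => 2) h23 (- (ln 2 / lc)) c).
- intros eps Heps. exists 1. split. lra. intros. rewrite Rminus_diag, Rabs_R0. auto.
- exact C23.
- intros s y Hy. destruct (Rle_dec y (c * s - ln 2 / lc)); auto. lra.
- intros s y Hy. destruct (Rle_dec y (c * s - ln 2 / lc)); auto. lra.
- intros s y. destruct (Rle_dec y (c * s - ln 2 / lc)); auto.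
- intros Hx. unfold h23. destruct (Rlt_dec x (cA * t)) as [_|n].
  + rewrite Hx. replace (- lc * (- (ln 2 / lc) + c * t - c * t)) with (ln 2) by (field; lra).
    rewrite exp_ln; lra.
  + exfalso. apply n. rewrite Hx. nra.
Qed.

Lemma speed r1 lam1 cA : 0 < r1 -> r1 <= - lam1 -> 2 * sqrt (- lam1) < cA ->
  0 < lam_of r1 (cspeed r1 lam1 cA) /\
  (lam_of r1 (cspeed r1 lam1 cA)) ^ 2 - cspeed r1 lam1 cA * lam_of r1 (cspeed r1 lam1 cA) + r1 = 0 /\
  cspeed r1 lam1 cA <= cA /\
  lam_of r1 (cspeed r1 lam1 cA) <= cA / 2 - sqrt (- lam1 - r1) /\
  lam_of r1 (cspeed r1 lam1 cA) * (cA - cspeed r1 lam1 cA) <= cA ^ 2 / 4 + lam1.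
Proof.
intros Hr1 Hl HcA.
assert (Hs2 : sqrt (- lam1 - r1) * sqrt (- lam1 - r1) = - lam1 - r1) by (apply sqrt_sqrt; lra).
assert (Hs0 : 0 <= sqrt (- lam1 - r1)) by apply sqrt_pos.
assert (Hq2 : sqrt r1 * sqrt r1 = r1) by (apply sqrt_sqrt; lra).
assert (Hq0 : 0 < sqrt r1) by (apply sqrt_lt_R0; lra).
assert (Hm2 : sqrt (- lam1) * sqrt (- lam1) = - lam1) by (apply sqrt_sqrt; lra).
assert (Hm0 : 0 <= sqrt (- lam1)) by apply sqrt_pos.
assert (Hsm : sqrt (- lam1 - r1) <= sqrt (- lam1)) by (apply sqrt_le_1; lra).
assert (HcA2 : 4 * (- lam1) < cA * cA) by nra.
set (s := sqrt (- lam1 - r1)) in *. set (q := sqrt r1) in *.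
unfold cspeed, lam_of, Ffun. fold s q.
destruct (Rlt_dec cA (2 * q + 2 * s)) as [Hlt | Hge].
- set (a := cA - 2 * s).
  assert (Ha : 0 < a) by (unfold a; lra).
  assert (Haq : a < 2 * q) by (unfold a; lra).
  assert (Ha2 : a * a < 4 * r1) by nra.
  assert (Hk : a / 2 <= 2 * r1 / a).
  { apply (Rmult_le_reg_r a); auto. unfold Rdiv. field_simplify; try lra; try nra. }
  assert (Hsq : sqrt ((a / 2 + 2 * r1 / a) ^ 2 - 4 * r1) = 2 * r1 / a - a / 2).
  { replace ((a / 2 + 2 * r1 / a) ^ 2 - 4 * r1) with ((2 * r1 / a - a / 2) ^ 2) by (field; lra).
    apply sqrt_pow2. lra. }
  rewrite Hsq.
  replace ((a / 2 + 2 * r1 / a - (2 * r1 / a - a / 2)) / 2) with (a / 2) by (field; lra).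
  assert (HcA' : cA = a + 2 * s) by (unfold a; ring).
  rewrite HcA'.
  split; [lra|]. split; [field; lra|]. split.
  { assert (0 <= a / 2 + 2 * s - 2 * r1 / a); [|lra].
    replace (a / 2 + 2 * s - 2 * r1 / a) with ((a * a + 4 * s * a - 4 * r1) / (2 * a)) by (field; lra).
    apply Rdiv_le_0_compat; [|lra]. rewrite HcA' in HcA2. nra. }
  split; [lra|].
  replace (a / 2 * (a + 2 * s - (a / 2 + 2 * r1 / a))) with (a * a / 4 + a * s - r1) by (field; lra).
  nra.
- assert (Hz : sqrt ((2 * q) ^ 2 - 4 * r1) = 0).
  { replace ((2 * q) ^ 2 - 4 * r1) with 0 by nra. apply sqrt_0. }
  rewrite Hz. replace ((2 * q - 0) / 2) with q by field.
  split; [lra|]. split; [nra|]. split; [lra|]. split; [lra|].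
  nra.
Qed.

Lemma c2_form (K al be : R) (w : R -> R) s y : (forall z, continuous w z) ->
  continuity_2d_pt (fun s y => K * exp (al * s) * w (y - be * s)) s y.
Proof.
intros Hw.
apply continuity_2d_pt_mult.
- apply continuity_2d_pt_mult. apply continuity_2d_pt_const.
  apply (continuity_2d_pt_ext (fun s y => exp (al * s + 0 * y + 0))).
  { intros; f_equal; ring. }
  apply (c2_comp exp (fun s y => al * s + 0 * y + 0)). apply cexp. apply c2_affine.
- apply (continuity_2d_pt_ext (fun s y => w ((- be) * s + 1 * y + 0))).
  { intros; f_equal; ring. }
  apply (c2_comp w (fun s y => (- be) * s + 1 * y + 0)). apply Hw. apply c2_affine.
Qed.

Lemma piece (K al be : R) (w w1 w2 : R -> R) :
  (forall z, is_derive w z (w1 z)) -> (forall z, is_derive w1 z (w2 z)) ->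
  (forall z, continuous w2 z) ->
  let v := fun s y => K * exp (al * s) * w (y - be * s) in
  forall s y,
   is_derive (fun y => v s y) y (K * exp (al * s) * w1 (y - be * s)) /\
   ex_derive (fun s => v s y) s /\ ex_derive (fun y => v s y) y /\
   ex_derive (fun y => dx v s y) y /\
   dt v s y = K * exp (al * s) * (al * w (y - be * s) - be * w1 (y - be * s)) /\
   dx v s y = K * exp (al * s) * w1 (y - be * s) /\
   dxx v s y = K * exp (al * s) * w2 (y - be * s) /\
   cont2 (dt v) s y /\ cont2 (dx v) s y /\ cont2 (dxx v) s y.
Proof.
intros Hw Hw1 Hw2 v.
assert (Hc0 : forall z, continuous w z).
{ intros z; apply cder; exists (w1 z); apply Hw. }
assert (Hc1 : forall z, continuous w1 z).
{ intros z; apply cder; exists (w2 z); apply Hw1. }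
assert (Dx : forall s y, is_derive (fun y => v s y) y (K * exp (al * s) * w1 (y - be * s))).
{ intros s y; unfold v. auto_derive. exists (w1 (y - be * s)); apply Hw.
  rewrite (is_derive_unique _ _ _ (Hw _)). unfold Rminus; ring. }
assert (Dt : forall s y, is_derive (fun s => v s y) s
          (K * exp (al * s) * (al * w (y - be * s) - be * w1 (y - be * s)))).
{ intros s y; unfold v. auto_derive. exists (w1 (y - be * s)); apply Hw.
  rewrite (is_derive_unique _ _ _ (Hw _)). unfold Rminus; ring. }
assert (Edx : forall s y, dx v s y = K * exp (al * s) * w1 (y - be * s)).
{ intros; unfold dx; apply is_derive_unique; apply Dx. }
assert (Edt : forall s y, dt v s y = K * exp (al * s) * (al * w (y - be * s) - be * w1 (y - be * s))).
{ intros; unfold dt; apply is_derive_unique; apply Dt. }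
assert (Dxx : forall s y, is_derive (fun y => dx v s y) y (K * exp (al * s) * w2 (y - be * s))).
{ intros s y. apply (is_derive_ext (fun y => K * exp (al * s) * w1 (y - be * s))).
  { intros; rewrite Edx; reflexivity. }
  auto_derive. exists (w2 (y - be * s)); apply Hw1.
  rewrite (is_derive_unique _ _ _ (Hw1 _)). unfold Rminus; ring. }
assert (Edxx : forall s y, dxx v s y = K * exp (al * s) * w2 (y - be * s)).
{ intros; unfold dxx; apply is_derive_unique; apply Dxx. }
intros s y. split; [apply Dx|]. split; [eexists; apply Dt|].
split; [eexists; apply Dx|]. split; [eexists; apply Dxx|].
split; [apply Edt|]. split; [apply Edx|]. split; [apply Edxx|].
split; [|split].
- apply cont2_iff. apply (continuity_2d_pt_ext (fun s y =>
    (K * al) * exp (al * s) * w (y - be * s) - (K * be) * exp (al * s) * w1 (y - be * s))).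
  { intros; rewrite Edt; ring. }
  apply continuity_2d_pt_minus; apply c2_form; auto.
- apply cont2_iff. apply (continuity_2d_pt_ext (fun s y => K * exp (al * s) * w1 (y - be * s))).
  { intros; rewrite Edx; ring. }
  apply c2_form; auto.
- apply cont2_iff. apply (continuity_2d_pt_ext (fun s y => K * exp (al * s) * w2 (y - be * s))).
  { intros; rewrite Edxx; ring. }
  apply c2_form; auto.
Qed.

Lemma Wpiece (cA L d : R) (g g1 g2 : R -> R) : L <> 0 ->
  (forall y, is_derive g y (g1 y)) -> (forall y, is_derive g1 y (g2 y)) ->
  (forall y, continuous g2 y) ->
  (forall z, is_derive (fun z => exp (-cA*(z+d)/2) * g ((z+d)/L)) z
       (exp (-cA*(z+d)/2) * (-cA/2 * g ((z+d)/L) + g1 ((z+d)/L) / L))) /\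
  (forall z, is_derive (fun z => exp (-cA*(z+d)/2) * (-cA/2 * g ((z+d)/L) + g1 ((z+d)/L) / L)) z
       (exp (-cA*(z+d)/2) * (cA^2/4 * g ((z+d)/L) - cA * g1 ((z+d)/L) / L + g2 ((z+d)/L) / L^2))) /\
  (forall z, continuous (fun z => exp (-cA*(z+d)/2) * (cA^2/4 * g ((z+d)/L) - cA * g1 ((z+d)/L) / L + g2 ((z+d)/L) / L^2)) z).
Proof.
intros HL Hg Hg1 Hg2.
assert (Hc0 : forall z, continuous g z).
{ intros z; apply cder; exists (g1 z); apply Hg. }
assert (Hc1 : forall z, continuous g1 z).
{ intros z; apply cder; exists (g2 z); apply Hg1. }
split; [|split].
- intros z. auto_derive. exists (g1 ((z + d) * / L)); apply Hg.
  rewrite (is_derive_unique _ _ _ (Hg _)). unfold Rdiv. field. auto.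
- intros z. auto_derive. split. exists (g1 ((z + d) * / L)); apply Hg.
  split; auto. exists (g2 ((z + d) * / L)); apply Hg1.
  rewrite (is_derive_unique _ _ _ (Hg _)). rewrite (is_derive_unique _ _ _ (Hg1 _)).
  unfold Rdiv. field. auto.
- intros z.
  assert (Ha : forall (h : R -> R), (forall y, continuous h y) ->
     continuous (fun z => h ((z + d) / L)) z).
  { intros h Hh. apply (continuous_ext (fun z => h ((/ L) * z + d / L))).
    { intros; f_equal; field; auto. }
    apply (ccomp (fun z => / L * z + d / L) h). apply caff. apply Hh. }
  apply cmul.
  + apply (continuous_ext (fun z => exp ((- cA / 2) * z + (-cA * d / 2)))).
    { intros; f_equal; field. }
    apply (ccomp (fun z => (- cA / 2) * z + (-cA * d / 2)) exp). apply caff. apply cexp.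
  + apply (continuous_ext (fun z => (cA^2/4) * g ((z+d)/L) + ((- cA / L) * g1 ((z+d)/L) + (/ L^2) * g2 ((z+d)/L)))).
    { intros. match goal with |- ?a = ?b => change (@eq R a b) end. unfold Rdiv; ring. }
    apply cplus; [|apply cplus]; apply cmul; try apply cconst; apply Ha; auto.
Qed.

Lemma arccot_facts x : 0 < x ->
  0 < arccot x < PI / 2 /\ 0 < sin (arccot x) /\ cos (arccot x) = x * sin (arccot x).
Proof.
intros Hx. unfold arccot.
assert (H0 : 0 < atan x) by (rewrite <- atan_0; apply atan_increasing; auto).
destruct (atan_bound x) as [_ H1].
assert (Hc : 0 < cos (atan x)) by (apply cos_gt_0; lra).
split; [lra|]. rewrite sin_shift, cos_shift. split; auto.
assert (Ht : tan (atan x) = x) by apply tan_atan.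
unfold tan in Ht. rewrite <- Ht at 2. field. lra.
Qed.

Lemma arccot_sum x : 0 < x -> arccot x + arccot (/ x) = PI / 2.
Proof. intros Hx. unfold arccot. rewrite atan_inv; auto. ring. Qed.

Lemma theta_small a b L : 0 < a -> 0 < b -> 0 < L ->
  L <= / sqrt a * arccot (sqrt (a / b)) ->
  0 < arccot (sqrt (b / a)) /\ 0 < sin (arccot (sqrt (b / a))) /\
  cos (arccot (sqrt (b / a))) = sqrt b / sqrt a * sin (arccot (sqrt (b / a))) /\
  0 < L * sqrt a + arccot (sqrt (b / a)) <= PI / 2.
Proof.
intros Ha Hb HL HLb.
assert (Hsa : 0 < sqrt a) by (apply sqrt_lt_R0; auto).
assert (Hsb : 0 < sqrt b) by (apply sqrt_lt_R0; auto).
assert (Ek : sqrt (b / a) = sqrt b / sqrt a) by (apply sqrt_div; lra).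
assert (Ek' : sqrt (a / b) = / (sqrt b / sqrt a)) by (rewrite sqrt_div; [field|lra|lra]; lra).
assert (Hk : 0 < sqrt b / sqrt a) by (apply Rdiv_lt_0_compat; auto).
rewrite Ek in *. rewrite Ek' in HLb.
destruct (arccot_facts _ Hk) as [[H1 H2] [H3 H4]].
pose proof (arccot_sum _ Hk) as Hs.
split; auto. split; auto. split; auto.
assert (L * sqrt a <= arccot (/ (sqrt b / sqrt a))).
{ apply (Rmult_le_compat_r (sqrt a)) in HLb; [|lra].
  replace (/ sqrt a * arccot (/ (sqrt b / sqrt a)) * sqrt a) with (arccot (/ (sqrt b / sqrt a))) in HLb
    by (field; lra). lra. }
split; [|lra]. assert (0 < L * sqrt a) by (apply Rmult_lt_0_compat; auto). lra.
Qed.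

Definition Profile r1 r2 r3 L lam1 (g0 g1 g1' g1'' g2 g2' g2'' : R -> R) : Prop :=
  (forall y, y <= 0 -> phi1 r1 r2 r3 L lam1 y = g0 y) /\
  (forall y, 0 < y < 1 -> phi1 r1 r2 r3 L lam1 y = g1 y) /\
  (forall y, 1 <= y -> phi1 r1 r2 r3 L lam1 y = g2 y) /\
  (forall y, continuous g0 y) /\ g0 0 = 1 /\ g1 0 = 1 /\ g1 1 = g2 1 /\
  (forall y, is_derive g1 y (g1' y)) /\ (forall y, is_derive g1' y (g1'' y)) /\
  (forall y, continuous g1'' y) /\
  (forall y, is_derive g2 y (g2' y)) /\ (forall y, is_derive g2' y (g2'' y)) /\
  (forall y, continuous g2'' y) /\
  (forall y, g1'' y = L ^ 2 * (- r2 - lam1) * g1 y) /\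
  (forall y, g2'' y = L ^ 2 * (- r3 - lam1) * g2 y) /\
  (forall y, 0 <= y <= 1 -> 0 <= g1 y) /\ (forall y, 1 <= y -> 0 <= g2 y) /\
  g2' 1 <= g1' 1 /\ g1' 0 <= L * sqrt (- lam1 - r1).

Lemma profile1 r1 r2 r3 L lam1 : 0 < r1 -> 0 < r2 -> 0 < r3 -> 0 < L -> Rmax r1 r3 < r2 ->
  is_lambda1 r1 r2 r3 L lam1 -> Lbar r1 r2 r3 < L ->
  exists g0 g1 g1' g1'' g2 g2' g2'', Profile r1 r2 r3 L lam1 g0 g1 g1' g1'' g2 g2' g2''.
Proof.
intros Hr1 Hr2 Hr3 HL Hmax [_ Hl] HLb.
destruct (Hl HLb) as [Hl1 [Hl2 Hcot]].
assert (Hm1 : lam1 < - Rmax r1 r3) by (eapply Rlt_le_trans; [exact Hl2| apply Rmin_l]).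
assert (Hm2 : lam1 < PI ^ 2 / L ^ 2 - r2) by (eapply Rlt_le_trans; [exact Hl2| apply Rmin_r]).
assert (Hx1 : r1 <= Rmax r1 r3) by apply Rmax_l.
assert (Hx3 : r3 <= Rmax r1 r3) by apply Rmax_r.
set (al := sqrt (- r1 - lam1)). set (p := sqrt (r2 + lam1)). set (be := sqrt (- r3 - lam1)).
assert (Hal : 0 < al) by (apply sqrt_lt_R0; lra).
assert (Hp : 0 < p) by (apply sqrt_lt_R0; lra).
assert (Hbe : 0 < be) by (apply sqrt_lt_R0; lra).
assert (Hal2 : al * al = - r1 - lam1) by (apply sqrt_sqrt; lra).
assert (Hp2 : p * p = r2 + lam1) by (apply sqrt_sqrt; lra).
assert (Hbe2 : be * be = - r3 - lam1) by (apply sqrt_sqrt; lra).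
set (C3 := arccot (sqrt ((- r1 - lam1) / (r2 + lam1)))).
assert (Ek : sqrt ((- r1 - lam1) / (r2 + lam1)) = al / p) by (apply sqrt_div; lra).
assert (Hk : 0 < al / p) by (apply Rdiv_lt_0_compat; auto).
destruct (arccot_facts _ Hk) as [[HC1 HC2] [HS HcC]].
rewrite <- Ek in HC1, HC2, HS, HcC. fold C3 in HC1, HC2, HS, HcC. rewrite Ek in HcC.
set (S := sin C3) in *.
assert (HLp : 0 < L * p) by (apply Rmult_lt_0_compat; auto).
assert (HPI : 0 < PI) by apply PI_RGT_0.
assert (HLpPI : L * p < PI).
{ assert (HH : (r2 + lam1) * L ^ 2 < PI ^ 2).
  { apply (Rmult_lt_compat_r (L ^ 2)) in Hm2; [|nra].
    replace ((PI ^ 2 / L ^ 2 - r2) * L ^ 2) with (PI ^ 2 - r2 * L ^ 2) in Hm2 by (field; lra). nra. }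
  rewrite <- Hp2 in HH. nra. }
set (X := L * p) in *.
assert (HsX : 0 < sin X) by (apply sin_gt_0; auto).
assert (Hrhs : sqrt ((r1 + lam1) * (r3 + lam1)) = al * be).
{ replace ((r1 + lam1) * (r3 + lam1)) with ((- r1 - lam1) * (- r3 - lam1)) by ring.
  apply sqrt_mult; lra. }
rewrite Hrhs in Hcot. fold al be p X in Hcot. rewrite <- Hp2 in Hcot.
unfold cot in Hcot.
assert (HcX : cos X = (p * p - al * be) / (p * (al + be)) * sin X).
{ rewrite <- Hcot. field. lra. }
set (th := X + C3).
assert (Hsth : sin th = sin X * S * ((al * al + p * p) / (p * (al + be)))).
{ unfold th. rewrite sin_plus, HcX, HcC. fold S. field. lra. }
assert (Hcth : cos th = - sin X * S * (be * (al * al + p * p) / (p * p * (al + be)))).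
{ unfold th. rewrite cos_plus, HcX, HcC. fold S. field. lra. }
assert (Hsthp : 0 < sin th).
{ rewrite Hsth. apply Rmult_lt_0_compat. nra. apply Rdiv_lt_0_compat; nra. }
assert (Hthpi : th < PI).
{ destruct (Rlt_le_dec th PI) as [h|h]; auto.
  assert (sin th <= 0) by (apply sin_le_0; unfold th in *; lra). lra. }
assert (Hid : p * cos th + be * sin th = 0).
{ rewrite Hsth, Hcth. field. lra. }
assert (Hpos1 : forall y, 0 <= y <= 1 -> 0 < sin (X * y + C3)).
{ intros y Hy. apply sin_gt_0. nra. unfold th in Hthpi. nra. }
exists (fun y => exp (L * al * y)),
  (fun y => sin (X * y + C3) / S), (fun y => X * cos (X * y + C3) / S),
  (fun y => - (X * X) * sin (X * y + C3) / S),
  (fun y => sin th / S * exp (- L * be * (y - 1))),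
  (fun y => sin th / S * (- L * be) * exp (- L * be * (y - 1))),
  (fun y => sin th / S * (L * be * (L * be)) * exp (- L * be * (y - 1))).
unfold Profile.
split; [|split; [|split; [|split; [|split; [|split; [|split; [|split; [|split; [|split;
  [|split; [|split; [|split; [|split; [|split; [|split; [|split; [|split]]]]]]]]]]]]]]]]].
- intros y Hy. unfold phi1. destruct (Rlt_dec (Lbar r1 r2 r3) L) as [_|n]; [|contradiction].
  cbv zeta. destruct (Rle_dec y 0); [|lra]. reflexivity.
- intros y Hy. unfold phi1. destruct (Rlt_dec (Lbar r1 r2 r3) L) as [_|n]; [|contradiction].
  cbv zeta. destruct (Rle_dec y 0); [lra|]. destruct (Rlt_dec y 1); [|lra]. reflexivity.
- intros y Hy. unfold phi1. destruct (Rlt_dec (Lbar r1 r2 r3) L) as [_|n]; [|contradiction].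
  cbv zeta. destruct (Rle_dec y 0); [lra|]. destruct (Rlt_dec y 1); [lra|]. reflexivity.
- intros y. apply cder. auto_derive. auto.
- simpl. rewrite Rmult_0_r. apply exp_0.
- simpl. rewrite Rmult_0_r, Rplus_0_l. change (sin C3) with S. field. lra.
- simpl. rewrite Rmult_1_r. fold th. replace (1 - 1) with 0 by ring.
  rewrite Rmult_0_r, exp_0. ring.
- intros y. auto_derive. auto. field. lra.
- intros y. auto_derive. auto. field. lra.
- intros y. apply cder. auto_derive. auto.
- intros y. auto_derive. auto. unfold Rminus; ring.
- intros y. auto_derive. auto. unfold Rminus; ring.
- intros y. apply cder. auto_derive. auto.
- intros y. simpl. unfold X. replace (- r2 - lam1) with (- (p * p)) by lra. field. lra.
- intros y. simpl. replace (- r3 - lam1) with (be * be) by lra. field. lra.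
- intros y Hy. simpl. apply Rlt_le. apply Rdiv_lt_0_compat; auto.
- intros y Hy. simpl. apply Rlt_le. apply Rmult_lt_0_compat. apply Rdiv_lt_0_compat; auto.
  apply exp_pos.
- simpl. rewrite Rmult_1_r. fold th. replace (1 - 1) with 0 by ring.
  rewrite Rmult_0_r, exp_0.
  assert (Hpc : p * cos th = - (be * sin th)) by lra.
  unfold X. apply Req_le. replace (L * p * cos th) with (L * (p * cos th)) by ring.
  rewrite Hpc. field. lra.
- simpl. rewrite Rmult_0_r, Rplus_0_l. rewrite HcC. unfold X.
  apply Req_le. replace (- lam1 - r1) with (- r1 - lam1) by ring. fold al. field. lra.
Qed.

Lemma profile2 r1 r2 r3 L lam1 : 0 < r1 -> 0 < r2 -> 0 < r3 -> 0 < L -> Rmax r1 r3 < r2 ->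
  is_lambda1 r1 r2 r3 L lam1 -> ~ Lbar r1 r2 r3 < L -> r1 < r3 ->
  exists g0 g1 g1' g1'' g2 g2' g2'', Profile r1 r2 r3 L lam1 g0 g1 g1' g1'' g2 g2' g2''.
Proof.
intros Hr1 Hr2 Hr3 HL Hmax [Hl _] HLb H13.
assert (HLb' : L <= Lbar r1 r2 r3) by lra.
pose proof (Hl HLb') as Hlam. rewrite Rmax_right in Hlam by lra.
rewrite Rmax_right in Hmax by lra.
unfold Lbar in HLb'. destruct (Req_EM_T r1 r3); [lra|].
rewrite Rmax_right in HLb' by lra. rewrite Rabs_left in HLb' by lra.
replace (- (r1 - r3)) with (r3 - r1) in HLb' by ring.
destruct (theta_small (r2 - r3) (r3 - r1) L) as [HC1 [HS [HcC Hth]]]; try lra; auto.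
set (q := sqrt (r2 - r3)) in *. set (C3 := arccot (sqrt ((r3 - r1) / (r2 - r3)))) in *.
set (S := sin C3) in *. set (sb := sqrt (r3 - r1)) in *.
assert (Hq : 0 < q) by (apply sqrt_lt_R0; lra).
assert (Hq2 : q * q = r2 - r3) by (apply sqrt_sqrt; lra).
set (th := L * q + C3) in *.
assert (HPI : 0 < PI) by apply PI_RGT_0.
assert (Hsth : 0 < sin th) by (apply sin_gt_0; lra).
assert (Hcth : 0 <= cos th) by (apply cos_ge_0; lra).
assert (HLq : 0 < L * q) by (apply Rmult_lt_0_compat; auto).
assert (Hpos1 : forall y, 0 <= y <= 1 -> 0 < sin (L * q * y + C3)).
{ intros y Hy. apply sin_gt_0. nra. unfold th in Hth. nra. }
assert (Hphi : forall y, phi1 r1 r2 r3 L lam1 y = psi2 r1 r2 r3 L y).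
{ intros y. unfold phi1. destruct (Rlt_dec (Lbar r1 r2 r3) L) as [h|_]; [contradiction|].
  destruct (Rlt_dec r1 r3) as [_|n13]; [reflexivity|lra]. }
exists (fun y => exp (L * sb * y)),
  (fun y => sin (L * q * y + C3) / S), (fun y => L * q * cos (L * q * y + C3) / S),
  (fun y => - (L * q * (L * q)) * sin (L * q * y + C3) / S),
  (fun y => (sin th + q * cos th * L * (y - 1)) / S),
  (fun y => q * cos th * L / S), (fun y => 0).
unfold Profile.
split; [|split; [|split; [|split; [|split; [|split; [|split; [|split; [|split; [|split;
  [|split; [|split; [|split; [|split; [|split; [|split; [|split; [|split]]]]]]]]]]]]]]]]].
- intros y Hy. rewrite Hphi. unfold psi2. cbv zeta. destruct (Rle_dec y 0); [|lra]. reflexivity.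
- intros y Hy. rewrite Hphi. unfold psi2. cbv zeta. destruct (Rle_dec y 0); [lra|].
  destruct (Rlt_dec y 1); [|lra]. reflexivity.
- intros y Hy. rewrite Hphi. unfold psi2. cbv zeta. destruct (Rle_dec y 0); [lra|].
  destruct (Rlt_dec y 1); [lra|]. reflexivity.
- intros y. apply cder. auto_derive. auto.
- simpl. rewrite Rmult_0_r. apply exp_0.
- simpl. rewrite Rmult_0_r, Rplus_0_l. change (sin C3) with S. field. lra.
- simpl. rewrite Rmult_1_r. fold th. replace (1 - 1) with 0 by ring. field. lra.
- intros y. auto_derive. auto. field. lra.
- intros y. auto_derive. auto. field. lra.
- intros y. apply cder. auto_derive. auto.
- intros y. auto_derive. auto. field. lra.
- intros y. auto_derive. auto. ring.
- intros y. apply cder. auto_derive. auto.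
- intros y. simpl. rewrite Hlam. replace (- r2 - - r3) with (- (q * q)) by lra. field. lra.
- intros y. simpl. rewrite Hlam. ring.
- intros y Hy. simpl. apply Rlt_le. apply Rdiv_lt_0_compat; auto.
- intros y Hy. simpl. apply Rdiv_le_0_compat; auto.
  assert (0 <= q * cos th * L * (y - 1)).
  { apply Rmult_le_pos; [|lra]. apply Rmult_le_pos; [|lra]. apply Rmult_le_pos; lra. }
  lra.
- simpl. rewrite Rmult_1_r. fold th. apply Req_le. field. lra.
- simpl. rewrite Rmult_0_r, Rplus_0_l. rewrite HcC. rewrite Hlam.
  replace (- - r3 - r1) with (r3 - r1) by ring. fold sb.
  apply Req_le. field. lra.
Qed.

Lemma profile3 r1 r2 r3 L lam1 : 0 < r1 -> 0 < r2 -> 0 < r3 -> 0 < L -> Rmax r1 r3 < r2 ->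
  is_lambda1 r1 r2 r3 L lam1 -> ~ Lbar r1 r2 r3 < L -> ~ r1 < r3 ->
  exists g0 g1 g1' g1'' g2 g2' g2'', Profile r1 r2 r3 L lam1 g0 g1 g1' g1'' g2 g2' g2''.
Proof.
intros Hr1 Hr2 Hr3 HL Hmax [Hl _] HLb H13.
assert (HLb' : L <= Lbar r1 r2 r3) by lra.
assert (H31 : r3 < r1).
{ destruct (Rtotal_order r1 r3) as [h|[h|h]]; try lra.
  exfalso. apply HLb. unfold Lbar. destruct (Req_EM_T r1 r3); [lra|contradiction]. }
pose proof (Hl HLb') as Hlam. rewrite Rmax_left in Hlam by lra.
rewrite Rmax_left in Hmax by lra.
unfold Lbar in HLb'. destruct (Req_EM_T r1 r3); [lra|].
rewrite Rmax_left in HLb' by lra. rewrite Rabs_right in HLb' by lra.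
destruct (theta_small (r2 - r1) (r1 - r3) L) as [HC1 [HS [HcC Hth]]]; try lra; auto.
set (q := sqrt (r2 - r1)) in *. set (C3 := arccot (sqrt ((r1 - r3) / (r2 - r1)))) in *.
set (S := sin C3) in *. set (sb := sqrt (r1 - r3)) in *.
assert (Hq : 0 < q) by (apply sqrt_lt_R0; lra).
assert (Hq2 : q * q = r2 - r1) by (apply sqrt_sqrt; lra).
assert (Hsb : 0 < sb) by (apply sqrt_lt_R0; lra).
assert (Hsb2 : sb * sb = r1 - r3) by (apply sqrt_sqrt; lra).
set (th := L * q + C3) in *.
assert (HPI : 0 < PI) by apply PI_RGT_0.
assert (Hsth : 0 < sin th) by (apply sin_gt_0; lra).
assert (Hcth : 0 <= cos th) by (apply cos_ge_0; lra).
assert (HLq : 0 < L * q) by (apply Rmult_lt_0_compat; auto).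
set (P1 := psi2 r3 r2 r1 L 1).
assert (HP1 : P1 = sin th / S).
{ unfold P1, psi2. cbv zeta. destruct (Rle_dec 1 0); [lra|]. destruct (Rlt_dec 1 1); [lra|].
  fold q C3 S th. replace (1 - 1) with 0 by ring. field. lra. }
assert (HP1p : 0 < P1) by (rewrite HP1; apply Rdiv_lt_0_compat; auto).
assert (Hpos1 : forall y, 0 <= y <= 1 -> 0 < sin (L * q * (1 - y) + C3)).
{ intros y Hy. apply sin_gt_0. nra. unfold th in Hth. nra. }
assert (Hphi : forall y, phi1 r1 r2 r3 L lam1 y = psi2 r3 r2 r1 L (1 - y) / P1).
{ intros y. unfold phi1. destruct (Rlt_dec (Lbar r1 r2 r3) L) as [h|_]; [contradiction|].
  destruct (Rlt_dec r1 r3) as [h|_]; [lra|reflexivity]. }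
exists (fun y => (sin th + q * cos th * L * ((1 - y) - 1)) / S / P1),
  (fun y => sin (L * q * (1 - y) + C3) / S / P1),
  (fun y => - (L * q) * cos (L * q * (1 - y) + C3) / S / P1),
  (fun y => - (L * q * (L * q)) * sin (L * q * (1 - y) + C3) / S / P1),
  (fun y => exp (L * sb * (1 - y)) / P1),
  (fun y => - (L * sb) * exp (L * sb * (1 - y)) / P1),
  (fun y => L * sb * (L * sb) * exp (L * sb * (1 - y)) / P1).
unfold Profile.
split; [|split; [|split; [|split; [|split; [|split; [|split; [|split; [|split; [|split;
  [|split; [|split; [|split; [|split; [|split; [|split; [|split; [|split]]]]]]]]]]]]]]]]].
- intros y Hy. rewrite Hphi. unfold psi2. cbv zeta.
  destruct (Rle_dec (1 - y) 0); [lra|]. destruct (Rlt_dec (1 - y) 1); [lra|]. reflexivity.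
- intros y Hy. rewrite Hphi. unfold psi2. cbv zeta.
  destruct (Rle_dec (1 - y) 0); [lra|]. destruct (Rlt_dec (1 - y) 1); [|lra]. reflexivity.
- intros y Hy. rewrite Hphi. unfold psi2. cbv zeta.
  destruct (Rle_dec (1 - y) 0); [|lra]. reflexivity.
- intros y. apply cder. auto_derive. auto.
- simpl. rewrite HP1. replace (1 - 0 - 1) with 0 by ring. field. lra.
- simpl. rewrite HP1. replace (L * q * (1 - 0) + C3) with th by (unfold th; ring). field. lra.
- simpl. replace (1 - 1) with 0 by ring. rewrite Rmult_0_r, Rplus_0_l, Rmult_0_r, exp_0.
  change (sin C3) with S. field. lra.
- intros y. auto_derive. auto. unfold Rminus. field. lra.
- intros y. auto_derive. auto. unfold Rminus. field. lra.
- intros y. apply cder. auto_derive. auto.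
- intros y. auto_derive. auto. unfold Rminus. field. lra.
- intros y. auto_derive. auto. unfold Rminus. field. lra.
- intros y. apply cder. auto_derive. auto.
- intros y. simpl. rewrite Hlam. replace (- r2 - - r1) with (- (q * q)) by lra. field. lra.
- intros y. simpl. rewrite Hlam. replace (- r3 - - r1) with (sb * sb) by lra. field. lra.
- intros y Hy. simpl. apply Rlt_le. apply Rdiv_lt_0_compat; auto. apply Rdiv_lt_0_compat; auto.
- intros y Hy. simpl. apply Rlt_le. apply Rdiv_lt_0_compat; auto. apply exp_pos.
- simpl. replace (1 - 1) with 0 by ring. rewrite !Rmult_0_r, Rplus_0_l, exp_0.
  rewrite HcC. apply Req_le. field. lra.
- simpl. assert (0 <= sqrt (- lam1 - r1)) by apply sqrt_pos.
  replace (L * q * (1 - 0) + C3) with th by (unfold th; ring).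
  assert (0 <= L * q * cos th / S / P1).
  { apply Rdiv_le_0_compat; auto. apply Rdiv_le_0_compat; auto. apply Rmult_le_pos; lra. }
  assert (0 <= L * sqrt (- lam1 - r1)) by (apply Rmult_le_pos; lra).
  replace (- (L * q) * cos th / S / P1) with (- (L * q * cos th / S / P1)) by (field; lra).
  lra.
Qed.

Lemma profile r1 r2 r3 L lam1 : 0 < r1 -> 0 < r2 -> 0 < r3 -> 0 < L -> Rmax r1 r3 < r2 ->
  is_lambda1 r1 r2 r3 L lam1 ->
  exists g0 g1 g1' g1'' g2 g2' g2'', Profile r1 r2 r3 L lam1 g0 g1 g1' g1'' g2 g2' g2''.
Proof.
intros. destruct (Rlt_dec (Lbar r1 r2 r3) L).
- apply profile1; auto.
- destruct (Rlt_dec r1 r3).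
  + apply profile2; auto.
  + apply profile3; auto.
Qed.

Lemma lam1_le r1 r2 r3 L lam1 : is_lambda1 r1 r2 r3 L lam1 -> r1 <= - lam1.
Proof.
intros [H1 H2]. assert (r1 <= Rmax r1 r3) by apply Rmax_l.
destruct (Rlt_dec (Lbar r1 r2 r3) L) as [h|h].
- destruct (H2 h) as [_ [h2 _]]. assert (Rmin (- Rmax r1 r3) (PI ^ 2 / L ^ 2 - r2) <= - Rmax r1 r3) by apply Rmin_l.
  lra.
- rewrite H1; lra.
Qed.


Lemma off_ok (U : R -> R -> R) t x d K al be (w w1 w2 : R -> R) : 0 < d ->
  (forall z, is_derive w z (w1 z)) -> (forall z, is_derive w1 z (w2 z)) ->
  (forall z, continuous w2 z) ->
  (forall s y, Rabs (s - t) < d -> Rabs (y - x) < d -> U s y = K * exp (al * s) * w (y - be * s)) ->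
  ex_derive (fun s => U s x) t /\ ex_derive (fun y => U t y) x /\
  ex_derive (fun y => dx U t y) x /\
  cont2 (dt U) t x /\ cont2 (dx U) t x /\ cont2 (dxx U) t x /\
  dt U t x = K * exp (al * t) * (al * w (x - be * t) - be * w1 (x - be * t)) /\
  dxx U t x = K * exp (al * t) * w2 (x - be * t) /\
  U t x = K * exp (al * t) * w (x - be * t).
Proof.
intros Hd Hw Hw1 Hw2 Heq.
pose proof (piece K al be w w1 w2 Hw Hw1 Hw2) as P. cbv zeta in P.
set (v := fun s y => K * exp (al * s) * w (y - be * s)) in *.
pose proof (transfer U v t x d Hd Heq) as T.
assert (H0 : Rabs (t - t) < d) by (rewrite Rminus_diag, Rabs_R0; auto).
assert (H1 : Rabs (x - x) < d) by (rewrite Rminus_diag, Rabs_R0; auto).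
destruct (T t x H0 H1) as [E1 [E2 [E3 [X1 [X2 X3]]]]].
destruct (P t x) as [_ [Q1 [Q2 [Q3 [Q4 [_ [Q6 [Q7 [Q8 Q9]]]]]]]]].
split; [auto|]. split; [auto|]. split; [auto|].
split; [|split; [|split]].
- apply (cont2_loc (dt v) (dt U) t x d Hd); auto.
  intros s y Hs Hy. destruct (T s y Hs Hy) as [e _]; auto.
- apply (cont2_loc (dx v) (dx U) t x d Hd); auto.
  intros s y Hs Hy. destruct (T s y Hs Hy) as [_ [e _]]; auto.
- apply (cont2_loc (dxx v) (dxx U) t x d Hd); auto.
  intros s y Hs Hy. destruct (T s y Hs Hy) as [_ [_ [e _]]]; auto.
- split; [rewrite E1; auto|]. split; [rewrite E3; auto|]. apply Heq; auto.
Qed.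

Lemma ineq3 cA L al lam1 rk E G G' G'' : L <> 0 -> G'' = L ^ 2 * (- rk - lam1) * G ->
  al * (E * G) - cA * (E * (- cA / 2 * G + G' / L))
  - E * (cA ^ 2 / 4 * G - cA * G' / L + G'' / L ^ 2) - rk * (E * G)
  = E * G * (al + cA ^ 2 / 4 + lam1).
Proof. intros HL HG. rewrite HG. field. auto. Qed.

Lemma cont_lin a b t : continuity_pt (fun s => a + b * s) t.
Proof. apply cont_pt_of. apply cder. auto_derive. auto. Qed.

Import ListNotations.
Set Bullet Behavior "Strict Subproofs".

Theorem lemma3p6
  (r1 r2 r3 L M lam1 cA B tau T : R) (A : R -> R) (f : R -> R -> R -> R)
  (Hr1 : 0 < r1) (Hr2 : 0 < r2) (Hr3 : 0 < r3) (HL : 0 < L) (HM : 0 < M)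
  (Hr2max : Rmax r1 r3 < r2)
  (Hlam1 : is_lambda1 r1 r2 r3 L lam1)
  (HcA : 2 * sqrt (- lam1) < cA)
  (HB : 0 <= B) (Htau : 0 <= tau) (HT : 0 < T)
  (HAcont : continuity A) (HApos : forall t, 0 <= A t)
  (HAlin : forall t, tau <= t < tau + T -> A t = cA * (t - tau) + B)
  (Hfbdd : forall K, exists MK, forall t x u, Rabs u <= K -> Rabs (f t x u) <= MK)
  (HfC2 : forall t x,
     (forall u, ex_derive (f t x) u) /\
     (forall u, ex_derive (Derive (f t x)) u) /\
     (forall u, continuous (Derive_n (f t x) 2) u))
  (Hf0 : forall t x, f t x 0 = 0)
  (Hfu0 : forall t x, is_derive (f t x) 0 (rfun r1 r2 r3 L A t x))
  (Hfkpp : forall t x u, 0 <= u ->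
     rfun r1 r2 r3 L A t x * u >= f t x u /\
     f t x u >= rfun r1 r2 r3 L A t x * u - M * u ^ 2)
  (Hfneg : forall t x u, 1 < u -> f t x u < 0) :
  forall C, 1 <= C ->
    gen_supersolution f tau (tau + T)
      (fun t x => C * ubar r1 r2 r3 L lam1 cA (t - tau) (x - B)).
Proof.
intros C HC.
pose proof (lam1_le _ _ _ _ _ Hlam1) as Hrl.
destruct (speed r1 lam1 cA Hr1 Hrl HcA) as [Hlc [Hquad [HccA [Hlcs Hkey]]]].
destruct (profile r1 r2 r3 L lam1 Hr1 Hr2 Hr3 HL Hr2max Hlam1)
  as [g0 [g1 [g1' [g1'' [g2 [g2' [g2'' HP]]]]]]].
destruct HP as [P0 [P1 [P2 [Cg0 [E00 [E10 [E11 [D1 [D1' [C1'' [D2 [D2' [C2''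
  [Eig1 [Eig2 [Pos1 [Pos2 [J1 J0]]]]]]]]]]]]]]]]]].
set (c := cspeed r1 lam1 cA) in *. set (lc := lam_of r1 c) in *.
set (s0 := sqrt (- lam1 - r1)) in *.
set (phi := phi1 r1 r2 r3 L lam1) in *.
assert (Hs0 : 0 <= s0) by apply sqrt_pos.
assert (HLn : L <> 0) by lra.
assert (Hl2 : 0 < ln 2 / lc) by (apply Rdiv_lt_0_compat; auto; apply ln2_pos).
assert (HC0 : 0 < C) by lra.
assert (Cg1 : forall z, continuous g1 z) by (intros z; apply cder; exists (g1' z); auto).
assert (Cg2 : forall z, continuous g2 z) by (intros z; apply cder; exists (g2' z); auto).
assert (Hphi0 : phi 0 = 1) by (rewrite P0; [auto|lra]).
assert (Hphic : forall y, continuous phi y).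
{ set (q12 := fun z => if Rlt_dec z 1 then g1 z else g2 z).
  assert (Cq : forall z, continuous q12 z).
  { intros z. apply (pw1 q12 g1 g2 1); auto.
    - intros w Hw. unfold q12. destruct (Rlt_dec w 1); auto; lra.
    - intros w Hw. unfold q12. destruct (Rlt_dec w 1); auto; lra.
    - intros w. unfold q12. destruct (Rlt_dec w 1); auto.
    - intros ->. auto. }
  intros y. apply (pw1 phi g0 q12 0); auto.
  - intros w Hw. apply P0; lra.
  - intros w Hw. unfold q12. destruct (Rlt_dec w 1).
    + apply P1; lra.
    + apply P2; lra.
  - intros w. destruct (Rle_dec w 0).
    + left; apply P0; auto.
    + right. unfold q12. destruct (Rlt_dec w 1).
      * apply P1; lra.
      * apply P2; lra.
  - intros ->. unfold q12. destruct (Rlt_dec 0 1); [|lra]. rewrite E00, E10; auto. }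
assert (Ub : forall t' x', ubar r1 r2 r3 L lam1 cA t' x' =
   if Rle_dec x' (c * t' - ln 2 / lc) then 2
   else if Rlt_dec x' (cA * t') then exp (- lc * (x' - c * t'))
   else exp (- lc * (cA - c) * t') * exp (- cA * (x' - cA * t') / 2) * phi ((x' - cA * t') / L))
  by reflexivity.
set (U := fun t x => C * ubar r1 r2 r3 L lam1 cA (t - tau) (x - B)).
split.
{
  intros t x Ht.
  assert (Hu : cont2 (ubar r1 r2 r3 L lam1 cA) (t - tau) (x - B)).
  { exact (ubar_gen_cont c lc cA L phi (t - tau) (x - B) Hlc HccA ltac:(lra) HL Hphic Hphi0). }
  intros eps Heps. destruct (Hu (eps / C)) as [d [Hd Hd']].
  { apply Rdiv_lt_0_compat; auto. }
  exists d. split; auto. intros s y Hs Hs' Hy.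
  unfold U. rewrite <- Rmult_minus_distr_l, Rabs_mult, Rabs_right by lra.
  assert (Rabs (ubar r1 r2 r3 L lam1 cA (s - tau) (y - B) - ubar r1 r2 r3 L lam1 cA (t - tau) (x - B)) < eps / C).
  { apply Hd'. replace (s - tau - (t - tau)) with (s - t) by ring; auto.
    replace (y - B - (x - B)) with (y - x) by ring; auto. }
  apply (Rmult_lt_compat_l C) in H; auto.
  replace (C * (eps / C)) with eps in H by (field; lra). exact H. }
set (d3 := - B + cA * tau). set (K3 := C * exp (lc * (cA - c) * tau)). set (al3 := - lc * (cA - c)).
set (W1 := fun z => exp (- cA * (z + d3) / 2) * g1 ((z + d3) / L)).
set (W1' := fun z => exp (- cA * (z + d3) / 2) * (- cA / 2 * g1 ((z + d3) / L) + g1' ((z + d3) / L) / L)).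
set (W1'' := fun z => exp (- cA * (z + d3) / 2) * (cA ^ 2 / 4 * g1 ((z + d3) / L) - cA * g1' ((z + d3) / L) / L + g1'' ((z + d3) / L) / L ^ 2)).
set (W2 := fun z => exp (- cA * (z + d3) / 2) * g2 ((z + d3) / L)).
set (W2' := fun z => exp (- cA * (z + d3) / 2) * (- cA / 2 * g2 ((z + d3) / L) + g2' ((z + d3) / L) / L)).
set (W2'' := fun z => exp (- cA * (z + d3) / 2) * (cA ^ 2 / 4 * g2 ((z + d3) / L) - cA * g2' ((z + d3) / L) / L + g2'' ((z + d3) / L) / L ^ 2)).
destruct (Wpiece cA L d3 g1 g1' g1'' HLn D1 D1' C1'') as [DW1 [DW1' CW1]].
fold W1 W1' W1'' in DW1, DW1', CW1.
destruct (Wpiece cA L d3 g2 g2' g2'' HLn D2 D2' C2'') as [DW2 [DW2' CW2]].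
fold W2 W2' W2'' in DW2, DW2', CW2.
set (V := fun z => exp (- lc * (z - B + c * tau))).
set (V' := fun z => - lc * exp (- lc * (z - B + c * tau))).
set (V'' := fun z => lc * lc * exp (- lc * (z - B + c * tau))).
assert (DV : forall z, is_derive V z (V' z)) by (intros z; unfold V, V'; auto_derive; auto; unfold Rminus; ring).
assert (DV' : forall z, is_derive V' z (V'' z)) by (intros z; unfold V', V''; auto_derive; auto; unfold Rminus; ring).
assert (CV : forall z, continuous V'' z) by (intros z; apply cder; unfold V''; auto_derive; auto).
assert (DO : forall z, is_derive (fun _ : R => 1) z ((fun _ : R => 0) z)) by (intros z; auto_derive; auto).
assert (DO' : forall z, is_derive (fun _ : R => 0) z ((fun _ : R => 0) z)) by (intros z; auto_derive; auto).
assert (CO : forall z, continuous (fun _ : R => 0) z) by (intros z; apply cconst).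
assert (Hexp3 : forall s, exp (- lc * (cA - c) * (s - tau)) = exp (lc * (cA - c) * tau) * exp (al3 * s)).
{ intros s. rewrite <- exp_plus. f_equal. unfold al3. ring. }
assert (Rep1 : forall s y, y <= B + c * (s - tau) - ln 2 / lc ->
   U s y = 2 * C * exp (0 * s) * (fun _ : R => 1) (y - 0 * s)).
{ intros s y Hy. unfold U. rewrite Ub. destruct (Rle_dec (y - B) (c * (s - tau) - ln 2 / lc)); [|lra].
  rewrite Rmult_0_l, exp_0. ring. }
assert (Rep2 : forall s y, B + c * (s - tau) - ln 2 / lc < y < B + cA * (s - tau) ->
   U s y = C * exp (0 * s) * V (y - c * s)).
{ intros s y Hy. unfold U. rewrite Ub. destruct (Rle_dec (y - B) (c * (s - tau) - ln 2 / lc)); [lra|].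
  destruct (Rlt_dec (y - B) (cA * (s - tau))); [|lra].
  rewrite Rmult_0_l, exp_0. unfold V. rewrite Rmult_1_r. do 2 f_equal. ring. }
assert (Rep31 : forall s y, B + c * (s - tau) - ln 2 / lc < y ->
   B + cA * (s - tau) <= y < B + cA * (s - tau) + L ->
   U s y = K3 * exp (al3 * s) * W1 (y - cA * s)).
{ intros s y Hy Hy'. unfold U. rewrite Ub. destruct (Rle_dec (y - B) (c * (s - tau) - ln 2 / lc)); [lra|].
  destruct (Rlt_dec (y - B) (cA * (s - tau))); [lra|].
  replace (y - B - cA * (s - tau)) with (y - cA * s + d3) by (unfold d3; ring).
  assert (Hz : phi ((y - cA * s + d3) / L) = g1 ((y - cA * s + d3) / L)).
  { destruct (Req_dec (y - cA * s + d3) 0) as [e|e].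
    - rewrite e. replace (0 / L) with 0 by (field; lra). rewrite Hphi0, E10; auto.
    - apply P1. unfold d3 in *. split.
      + apply Rdiv_lt_0_compat; lra.
      + unfold Rdiv. apply (Rmult_lt_reg_r L); [lra|].
        rewrite Rmult_assoc, Rinv_l, Rmult_1_r, Rmult_1_l; lra. }
  rewrite Hz, Hexp3. unfold K3, W1. ring. }
assert (Rep32 : forall s y, B + c * (s - tau) - ln 2 / lc < y ->
   B + cA * (s - tau) + L <= y ->
   U s y = K3 * exp (al3 * s) * W2 (y - cA * s)).
{ intros s y Hy Hy'. unfold U. rewrite Ub. destruct (Rle_dec (y - B) (c * (s - tau) - ln 2 / lc)); [lra|].
  destruct (Rlt_dec (y - B) (cA * (s - tau))); [lra|].
  replace (y - B - cA * (s - tau)) with (y - cA * s + d3) by (unfold d3; ring).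
  assert (Hz : phi ((y - cA * s + d3) / L) = g2 ((y - cA * s + d3) / L)).
  { apply P2. unfold d3 in *. unfold Rdiv. apply (Rmult_le_reg_r L); [lra|].
    rewrite Rmult_assoc, Rinv_l, Rmult_1_r, Rmult_1_l; lra. }
  rewrite Hz, Hexp3. unfold K3, W2. ring. }
assert (HK3 : 0 < K3) by (unfold K3; apply Rmult_lt_0_compat; [lra|apply exp_pos]).
assert (Ineq3 : forall t x rk (W W' W'' g g' g'' : R -> R),
  (forall z, W z = exp (- cA * (z + d3) / 2) * g ((z + d3) / L)) ->
  (forall z, W' z = exp (- cA * (z + d3) / 2) * (- cA / 2 * g ((z + d3) / L) + g' ((z + d3) / L) / L)) ->
  (forall z, W'' z = exp (- cA * (z + d3) / 2) * (cA ^ 2 / 4 * g ((z + d3) / L) - cA * g' ((z + d3) / L) / L + g'' ((z + d3) / L) / L ^ 2)) ->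
  g'' ((x - cA * t + d3) / L) = L ^ 2 * (- rk - lam1) * g ((x - cA * t + d3) / L) ->
  0 <= g ((x - cA * t + d3) / L) ->
  f t x (K3 * exp (al3 * t) * W (x - cA * t)) <= rk * (K3 * exp (al3 * t) * W (x - cA * t)) ->
  K3 * exp (al3 * t) * (al3 * W (x - cA * t) - cA * W' (x - cA * t)) >=
  K3 * exp (al3 * t) * W'' (x - cA * t) + f t x (K3 * exp (al3 * t) * W (x - cA * t))).
{ intros t x rk W W' W'' g g' g'' HW HW' HW'' Heig Hg Hf.
  rewrite !HW in *. rewrite !HW', !HW''.
  set (E := exp (- cA * (x - cA * t + d3) / 2)) in *.
  set (G := g ((x - cA * t + d3) / L)) in *.
  set (G' := g' ((x - cA * t + d3) / L)) in *.
  set (G'' := g'' ((x - cA * t + d3) / L)) in *.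
  set (Mx := K3 * exp (al3 * t)) in *.
  set (F := f t x (Mx * (E * G))) in *.
  assert (HE : 0 < E) by apply exp_pos.
  assert (HMx : 0 < Mx) by (unfold Mx; apply Rmult_lt_0_compat; [auto|apply exp_pos]).
  pose proof (ineq3 cA L al3 lam1 rk E G G' G'' HLn Heig) as Hi.
  assert (H1 : 0 <= E * G * (al3 + cA ^ 2 / 4 + lam1)).
  { apply Rmult_le_pos. apply Rmult_le_pos; lra. unfold al3. lra. }
  assert (H2 : 0 <= Mx * (E * G * (al3 + cA ^ 2 / 4 + lam1))) by (apply Rmult_le_pos; lra).
  rewrite <- Hi in H2. lra. }
exists [fun s => B + c * (s - tau) - ln 2 / lc; fun s => B + cA * (s - tau);
        fun s => B + cA * (s - tau) + L].
split; [|split].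
{ intros g Hg t Ht. simpl in Hg. destruct Hg as [<-|[<-|[<-|[]]]];
  apply cont_pt_of; apply cder; auto_derive; auto. }
{ intros t x Ht Hng.
  pose proof (Hng _ (or_introl eq_refl)) as N1.
  pose proof (Hng _ (or_intror (or_introl eq_refl))) as N2.
  pose proof (Hng _ (or_intror (or_intror (or_introl eq_refl)))) as N3.
  cbv beta in N1, N2, N3.
  assert (Hord : B + c * (t - tau) - ln 2 / lc < B + cA * (t - tau)).
  { assert (c * (t - tau) <= cA * (t - tau)) by (apply Rmult_le_compat_r; lra). lra. }
  assert (HAt : A t = cA * (t - tau) + B) by (apply HAlin; lra).
  destruct (Rtotal_order x (B + c * (t - tau) - ln 2 / lc)) as [a1|[a1|a1]]; [|contradiction|].
  - destruct (box_lt (B - c * tau - ln 2 / lc) c t x) as [d [Hd Hd']]. lra.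
    destruct (off_ok U t x d (2 * C) 0 0 (fun _ => 1) (fun _ => 0) (fun _ => 0) Hd DO DO' CO)
      as [X1 [X2 [X3 [Ct [Cx [Cxx [Edt [Edxx Eu]]]]]]]].
    { intros s y Hs Hy. apply Rep1. specialize (Hd' s y Hs Hy). lra. }
    do 6 (split; [assumption|]). rewrite Edt, Edxx.
    replace (exp (0 * t)) with 1 in * by (rewrite Rmult_0_l; symmetry; apply exp_0).
    assert (f t x (U t x) < 0). { apply Hfneg. rewrite Eu. lra. }
    lra.
  - destruct (Rtotal_order x (B + cA * (t - tau))) as [a2|[a2|a2]]; [|contradiction|].
    + destruct (box_gt (B - c * tau - ln 2 / lc) c t x) as [d1 [Hd1 Hd1']]. lra.
      destruct (box_lt (B - cA * tau) cA t x) as [d2 [Hd2 Hd2']]. lra.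
      assert (Hm1 : Rmin d1 d2 <= d1) by apply Rmin_l. assert (Hm2 : Rmin d1 d2 <= d2) by apply Rmin_r.
      destruct (off_ok U t x (Rmin d1 d2) C 0 c V V' V'' ltac:(apply Rmin_pos; auto) DV DV' CV)
        as [X1 [X2 [X3 [Ct [Cx [Cxx [Edt [Edxx Eu]]]]]]]].
      { intros s y Hs Hy. apply Rep2.
        specialize (Hd1' s y ltac:(lra) ltac:(lra)). specialize (Hd2' s y ltac:(lra) ltac:(lra)). lra. }
      do 6 (split; [assumption|]). rewrite Edt, Edxx.
      assert (Hr : rfun r1 r2 r3 L A t x = r1).
      { unfold rfun. destruct (Rlt_dec x (A t)); [auto|lra]. }
      assert (HE : 0 < V (x - c * t)) by apply exp_pos.
      destruct (Hfkpp t x (U t x)) as [Hf _].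
      { rewrite Eu. replace (exp (0 * t)) with 1 by (rewrite Rmult_0_l; symmetry; apply exp_0). nra. }
      rewrite Hr, Eu in Hf. rewrite Eu.
      replace (exp (0 * t)) with 1 in * by (rewrite Rmult_0_l; symmetry; apply exp_0).
      unfold V', V''. fold (V (x - c * t)). set (E := V (x - c * t)) in *.
      assert (Hcl : c * lc = lc * lc + r1) by lra.
      assert (C * E * (c * lc) = C * E * (lc * lc + r1)) by (rewrite Hcl; reflexivity).
      lra.
    + destruct (Rtotal_order x (B + cA * (t - tau) + L)) as [a3|[a3|a3]]; [|contradiction|].
      * destruct (box_gt (B - c * tau - ln 2 / lc) c t x) as [d1 [Hd1 Hd1']]. lra.
        destruct (box_gt (B - cA * tau) cA t x) as [d2 [Hd2 Hd2']]. lra.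
        destruct (box_lt (B - cA * tau + L) cA t x) as [d4 [Hd4 Hd4']]. lra.
        set (dd := Rmin d1 (Rmin d2 d4)).
        assert (Hm1 : dd <= d1) by apply Rmin_l.
        assert (Hm2 : dd <= d2) by (eapply Rle_trans; [apply Rmin_r|apply Rmin_l]).
        assert (Hm3 : dd <= d4) by (eapply Rle_trans; [apply Rmin_r|apply Rmin_r]).
        assert (Hdd : 0 < dd) by (apply Rmin_pos; auto; apply Rmin_pos; auto).
        destruct (off_ok U t x dd K3 al3 cA W1 W1' W1'' Hdd DW1 DW1' CW1)
          as [X1 [X2 [X3 [Ct [Cx [Cxx [Edt [Edxx Eu]]]]]]]].
        { intros s y Hs Hy. apply Rep31.
          specialize (Hd1' s y ltac:(lra) ltac:(lra)). lra.
          specialize (Hd2' s y ltac:(lra) ltac:(lra)). specialize (Hd4' s y ltac:(lra) ltac:(lra)). lra. }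
        do 6 (split; [assumption|]). rewrite Edt, Edxx.
        assert (Hr : rfun r1 r2 r3 L A t x = r2).
        { unfold rfun. destruct (Rlt_dec x (A t)); [lra|]. destruct (Rlt_dec x (A t + L)); [auto|lra]. }
        assert (Hz : 0 <= (x - cA * t + d3) / L <= 1).
        { unfold d3. split.
          - apply Rdiv_le_0_compat; lra.
          - unfold Rdiv. apply (Rmult_le_reg_r L); [lra|].
            rewrite Rmult_assoc, Rinv_l, Rmult_1_r, Rmult_1_l; lra. }
        assert (HU0 : 0 <= U t x).
        { rewrite Eu. apply Rmult_le_pos. apply Rlt_le, Rmult_lt_0_compat; auto; apply exp_pos.
          unfold W1. apply Rmult_le_pos. apply Rlt_le, exp_pos. apply Pos1; auto. }
        destruct (Hfkpp t x (U t x) HU0) as [Hf _]. rewrite Hr, Eu in Hf. rewrite Eu.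
        apply (Ineq3 t x r2 W1 W1' W1'' g1 g1' g1''); auto; try lra.
      * destruct (box_gt (B - c * tau - ln 2 / lc) c t x) as [d1 [Hd1 Hd1']]. lra.
        destruct (box_gt (B - cA * tau + L) cA t x) as [d2 [Hd2 Hd2']]. lra.
        assert (Hm1 : Rmin d1 d2 <= d1) by apply Rmin_l. assert (Hm2 : Rmin d1 d2 <= d2) by apply Rmin_r.
        destruct (off_ok U t x (Rmin d1 d2) K3 al3 cA W2 W2' W2'' ltac:(apply Rmin_pos; auto) DW2 DW2' CW2)
          as [X1 [X2 [X3 [Ct [Cx [Cxx [Edt [Edxx Eu]]]]]]]].
        { intros s y Hs Hy. apply Rep32.
          specialize (Hd1' s y ltac:(lra) ltac:(lra)). lra.
          specialize (Hd2' s y ltac:(lra) ltac:(lra)). lra. }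
        do 6 (split; [assumption|]). rewrite Edt, Edxx.
        assert (Hr : rfun r1 r2 r3 L A t x = r3).
        { unfold rfun. destruct (Rlt_dec x (A t)); [lra|]. destruct (Rlt_dec x (A t + L)); [lra|auto]. }
        assert (Hz : 1 <= (x - cA * t + d3) / L).
        { unfold d3. unfold Rdiv. apply (Rmult_le_reg_r L); [lra|].
          rewrite Rmult_assoc, Rinv_l, Rmult_1_r, Rmult_1_l; lra. }
        assert (HU0 : 0 <= U t x).
        { rewrite Eu. apply Rmult_le_pos. apply Rlt_le, Rmult_lt_0_compat; auto; apply exp_pos.
          unfold W2. apply Rmult_le_pos. apply Rlt_le, exp_pos. apply Pos2; auto. }
        destruct (Hfkpp t x (U t x) HU0) as [Hf _]. rewrite Hr, Eu in Hf. rewrite Eu.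
        apply (Ineq3 t x r3 W2 W2' W2'' g2 g2' g2''); auto; try lra.
        }
intros t x Ht [g [Hin Hx]]. simpl in Hin.
assert (Hord : B + c * (t - tau) - ln 2 / lc < B + cA * (t - tau)).
{ assert (c * (t - tau) <= cA * (t - tau)) by (apply Rmult_le_compat_r; lra). lra. }
assert (E0 : exp (0 * t) = 1) by (rewrite Rmult_0_l; apply exp_0).
pose proof (piece (2 * C) 0 0 _ _ _ DO DO' CO) as Pa. cbv zeta in Pa. destruct (Pa t x) as [Da _].
pose proof (piece C 0 c V V' V'' DV DV' CV) as Pb. cbv zeta in Pb. destruct (Pb t x) as [Db _].
pose proof (piece K3 al3 cA W1 W1' W1'' DW1 DW1' CW1) as Pc. cbv zeta in Pc. destruct (Pc t x) as [Dc _].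
pose proof (piece K3 al3 cA W2 W2' W2'' DW2 DW2' CW2) as Pd. cbv zeta in Pd. destruct (Pd t x) as [Dd _].
assert (EK : K3 * exp (al3 * t) = C * exp (- lc * (cA - c) * (t - tau))) by (unfold K3; rewrite Hexp3; ring).
destruct Hin as [<-|[<-|[<-|[]]]]; cbv beta in Hx.
- exists (2 * C * exp (0 * t) * (fun _ : R => 0) (x - 0 * t)), (C * exp (0 * t) * V' (x - c * t)).
  split; [|split].
  + apply (onesided_left U t x (fun y => 2 * C * exp (0 * t) * (fun _ : R => 1) (y - 0 * t)) _ 1).
    * lra.
    * intros h Hh. apply Rep1. lra.
    * apply Rep1. lra.
    * exact Da.
  + apply (onesided_right U t x (fun y => C * exp (0 * t) * V (y - c * t)) _ (B + cA * (t - tau) - x)).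
    * lra.
    * intros h Hh. apply Rep2. lra.
    * rewrite (Rep1 t x) by lra. unfold V. cbv beta.
      replace (- lc * (x - c * t - B + c * tau)) with (ln 2) by (rewrite Hx; field; lra).
      rewrite exp_ln by lra. ring.
    * exact Db.
  + cbv beta. unfold V'. rewrite E0.
    assert (0 < exp (- lc * (x - c * t - B + c * tau))) by apply exp_pos.
    set (EE := exp (- lc * (x - c * t - B + c * tau))) in *.
    assert (0 < C * lc) by (apply Rmult_lt_0_compat; lra).
    assert (0 < C * lc * EE) by (apply Rmult_lt_0_compat; lra).
    lra.
- exists (C * exp (0 * t) * V' (x - c * t)), (K3 * exp (al3 * t) * W1' (x - cA * t)).
  assert (Hz : x - cA * t + d3 = 0) by (rewrite Hx; unfold d3; ring).
  assert (EV : exp (- lc * (x - c * t - B + c * tau)) = exp (- lc * (cA - c) * (t - tau)))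
    by (f_equal; rewrite Hx; ring).
  assert (HW : 0 / L = 0) by (field; lra).
  assert (HW' : - cA * 0 / 2 = 0) by field.
  split; [|split].
  + apply (onesided_left U t x (fun y => C * exp (0 * t) * V (y - c * t)) _ (x - (B + c * (t - tau) - ln 2 / lc))).
    * lra.
    * intros h Hh. apply Rep2. lra.
    * rewrite (Rep31 t x) by lra. rewrite EK. unfold V, W1. rewrite Hz, HW, HW', exp_0, E10, E0, EV. ring.
    * exact Db.
  + apply (onesided_right U t x (fun y => K3 * exp (al3 * t) * W1 (y - cA * t)) _ L).
    * lra.
    * intros h Hh. apply Rep31; lra.
    * apply Rep31; lra.
    * exact Dc.
  + rewrite EK. unfold V', W1'. rewrite Hz, HW, HW', exp_0, E10, E0, EV.
    assert (HE : 0 < exp (- lc * (cA - c) * (t - tau))) by apply exp_pos.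
    assert (Hg : g1' 0 / L <= s0).
    { apply (Rmult_le_reg_r L); [lra|]. unfold Rdiv. rewrite Rmult_assoc, Rinv_l, Rmult_1_r; lra. }
    assert (0 <= C * exp (- lc * (cA - c) * (t - tau)) * (cA / 2 - lc - g1' 0 / L)).
    { apply Rmult_le_pos; [|lra]. apply Rlt_le, Rmult_lt_0_compat; auto. }
    lra.
- exists (K3 * exp (al3 * t) * W1' (x - cA * t)), (K3 * exp (al3 * t) * W2' (x - cA * t)).
  assert (Hz : (x - cA * t + d3) / L = 1) by (rewrite Hx; unfold d3; field; lra).
  split; [|split].
  + apply (onesided_left U t x (fun y => K3 * exp (al3 * t) * W1 (y - cA * t)) _ L).
    * lra.
    * intros h Hh. apply Rep31; lra.
    * rewrite (Rep32 t x) by lra. unfold W1, W2. rewrite Hz, E11. reflexivity.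
    * exact Dc.
  + apply (onesided_right U t x (fun y => K3 * exp (al3 * t) * W2 (y - cA * t)) _ 1).
    * lra.
    * intros h Hh. apply Rep32; lra.
    * apply Rep32; lra.
    * exact Dd.
  + unfold W1', W2'. rewrite Hz, E11. apply Rle_ge.
    apply Rmult_le_compat_l. { apply Rlt_le, Rmult_lt_0_compat; auto; apply exp_pos. }
    apply Rmult_le_compat_l. { apply Rlt_le, exp_pos. }
    apply Rplus_le_compat_l. unfold Rdiv. apply Rmult_le_compat_r; auto.
    apply Rlt_le, Rinv_0_lt_compat; lra.
Qed.
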